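(* Let $K$ be a field, $I\subset R=K[x_1,\ldots,x_n]$ a monomial ideal, and $\mathfrak{p}$ a monomial prime ideal of $R$ containing $I$. If $I$ has the copersistence property, then the monomial localization $I(\mathfrak{p})\subset R(\mathfrak{p})$ has the copersistence property.
   Context: An ideal $I$ in a commutative Noetherian ring $R$ has the copersistence property if $\mathrm{Ass}_R(R/I^k)\supseteq\mathrm{Ass}_R(R/I^{k+1})$ for all $k\ge1$. For a monomial prime ideal $\mathfrak{p}=(x_{i_1},\ldots,x_{i_r})$, $R(\mathfrak{p})=K[x_{i_1},\ldots,x_{i_r}]$ and the monomial localization $I(\mathfrak{p})$ is the ideal of $R(\mathfrak{p})$ obtained as the image of $I$ under the $K$-algebra homomorphism $R\to R(\mathfrak{p})$ sending $x_j\mapsto1$ for all $x_j\notin\{x_{i_1},\ldots,x_{i_r}\}$ and fixing the other variables. *)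

(* Defs.v *)
From mathcomp Require Import all_boot all_order all_algebra.
From mathcomp Require Import mpoly.
Set Implicit Arguments. Unset Strict Implicit. Unset Printing Implicit Defensive.
Import GRing.Theory.
Local Open Scope ring_scope.

Section Ideals.
Variable R : comNzRingType.

Definition is_ideal (I : R -> Prop) : Prop :=
  [/\ I 0, (forall a b, I a -> I b -> I (a + b)) & (forall r a, I a -> I (r * a))].

Definition ideal_gen (G : R -> Prop) : R -> Prop :=
  fun f => exists s : seq (R * R),
    (forall p, p \in s -> G p.2) /\ f = \sum_(p <- s) p.1 * p.2.

Definition ideal_mul (I J : R -> Prop) : R -> Prop :=
  ideal_gen (fun x => exists a b, [/\ I a, J b & x = a * b]).

Fixpoint ideal_pow (I : R -> Prop) (k : nat) : R -> Prop :=
  match k with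
  | 0 => fun _ => True
  | k'.+1 => ideal_mul I (ideal_pow I k')
  end.

Definition is_prime_ideal (P : R -> Prop) : Prop :=
  [/\ is_ideal P, ~ P 1 & forall a b, P (a * b) -> P a \/ P b].

(* P \in Ass_R(R/J) : P is prime and P = (J : f) for some f in R *)
Definition Ass (J : R -> Prop) (P : R -> Prop) : Prop :=
  is_prime_ideal P /\ exists f : R, forall g, P g <-> J (g * f).

Definition copersistent (I : R -> Prop) : Prop :=
  forall k : nat, (1 <= k)%N ->
    forall P, Ass (ideal_pow I k.+1) P -> Ass (ideal_pow I k) P.

End Ideals.

Section Monomial.
Variables (K : fieldType) (n : nat).

Definition is_monomial_ideal (I : {mpoly K[n]} -> Prop) : Prop :=
  is_ideal I /\ exists M : 'X_{1..n} -> Prop,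
    forall f, I f <-> ideal_gen (fun g => exists m, M m /\ g = 'X_[m]) f.

Definition monomial_prime (S : {set 'I_n}) : {mpoly K[n]} -> Prop :=
  ideal_gen (fun g => exists2 i, i \in S & g = 'X_i).

(* R(p_S) = K[x_i : i in S], realised as {mpoly K[#|S|]} where the
   variable number k corresponds to x_(enum_val k) (k-th element of S). *)
Definition loc_var (S : {set 'I_n}) (j : 'I_n) : {mpoly K[#|S|]} :=
  if [pick k : 'I_#|S| | enum_val (A := S) k == j] is Some k then 'X_k else 1.

(* the K-algebra map R -> R(p_S): x_j |-> 1 for j notin S, x_i |-> x_i *)
Definition loc_map (S : {set 'I_n}) (f : {mpoly K[n]}) : {mpoly K[#|S|]} :=
  mmap (fun c => c%:MP) (loc_var S) f.

Definition monomial_localization (S : {set 'I_n}) (I : {mpoly K[n]} -> Prop)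
  : {mpoly K[#|S|]} -> Prop :=
  ideal_gen (fun g => exists2 f, I f & g = loc_map S f).

End Monomial.

(* Main.v *)
Require Import Defs.
From mathcomp Require Import all_boot all_order all_algebra.
From mathcomp Require Import mpoly.
From Stdlib Require Import ClassicalEpsilon Classical.

Set Implicit Arguments. Unset Strict Implicit. Unset Printing Implicit Defensive.
Import Order.TTheory GRing.Theory.
Local Open Scope ring_scope.



Section Gen.
Variable R : comNzRingType.
Implicit Types (G J : R -> Prop).

Lemma gen_ideal G : is_ideal (ideal_gen G).
Proof.
split.
- by exists [::]; rewrite big_nil.
- move=> a b [s1 [H1 ->]] [s2 [H2 ->]]; exists (s1 ++ s2); split; last by rewrite big_cat.
  by move=> p; rewrite mem_cat => /orP[/H1|/H2].
- move=> r a [s [H ->]]; exists [seq (r * p.1, p.2) | p <- s]; split.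
    by move=> p /mapP[q /H Hq ->].
  by rewrite big_map mulr_sumr; apply: eq_bigr => p _; rewrite mulrA.
Qed.

Lemma gen_in G x : G x -> ideal_gen G x.
Proof. by move=> Gx; exists [:: (1, x)]; split; [move=> p; rewrite inE => /eqP ->|rewrite big_seq1 mul1r]. Qed.

Lemma ideal_sum J (T : eqType) (s : seq T) (F : T -> R) :
  is_ideal J -> (forall i, i \in s -> J (F i)) -> J (\sum_(i <- s) F i).
Proof.
move=> [J0 JD JM]; elim: s => [|x s IH] H; first by rewrite big_nil.
rewrite big_cons; apply: JD; first by apply: H; rewrite inE eqxx.
by apply: IH => i Hi; apply: H; rewrite inE Hi orbT.
Qed.

Lemma gen_min G J : is_ideal J -> (forall x, G x -> J x) -> forall f, ideal_gen G f -> J f.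
Proof.
move=> HJ HG f [s [Hs ->]]; apply: ideal_sum => // p Hp.
case: HJ => _ _ JM; apply: JM; apply: HG; by apply: Hs.
Qed.

Lemma prime_pow (P : R -> Prop) (a : R) k : is_prime_ideal P -> P (a ^+ k) -> P a.
Proof.
case=> _ P1 Pm; elim: k => [|k IH]; first by rewrite expr0.
by rewrite exprS => /Pm [//|/IH].
Qed.

End Gen.



Section Mono.
Variables (K : fieldType) (n : nat).
Local Notation R := {mpoly K[n]}.
Implicit Types (A : 'X_{1..n} -> Prop) (f g : R).

Definition up A (m : 'X_{1..n}) := exists2 a, A a & (a <= m)%MM.
Definition mgen A : R -> Prop := ideal_gen (fun g => exists m, A m /\ g = 'X_[m]).

Lemma up_mono A m m' : up A m -> (m <= m')%MM -> up A m'.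
Proof. by case=> a Aa le le'; exists a => //; apply: lepm_trans le le'. Qed.

Lemma up_addr A m m' : up A m -> up A (m + m')%MM.
Proof. by move=> H; apply: up_mono H _; apply: lem_addr. Qed.

Lemma up_addl A m m' : up A m -> up A (m' + m)%MM.
Proof. by move=> H; apply: up_mono H _; apply: lem_addl. Qed.

Lemma mgen_ideal A : is_ideal (mgen A).
Proof. exact: gen_ideal. Qed.

Lemma mgenX A m : A m -> mgen A 'X_[m].
Proof. by move=> Am; apply: gen_in; exists m. Qed.

Lemma mgenP A f : mgen A f <-> (forall m, m \in msupp f -> up A m).
Proof.
split.
- case=> s [Hs ->] {f}; elim: s Hs => [|p s IH] Hs m.
    by rewrite big_nil mcoeff_msupp mcoeff0 eqxx.
  rewrite big_cons => /msuppD_le; rewrite mem_cat => /orP[|].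
    have [a [Aa ->]] : exists a, A a /\ p.2 = 'X_[a] by apply: Hs; rewrite inE eqxx.
    rewrite (perm_mem (msuppMX _ _)) => /mapP [m' _ ->]; apply: up_addr.
    by exists a => //; exact: lepm_refl.
  by apply: IH => q Hq; apply: Hs; rewrite inE Hq orbT.
- move=> H; rewrite [f]mpolyE; apply: ideal_sum; first exact: gen_ideal.
  move=> m /H [a Aa le].
  have -> : f@_m *: 'X_[m] = (f@_m *: 'X_[m - a]) * 'X_[a].
    by rewrite -scalerAl -mpolyXD submK.
  case: (mgen_ideal A) => _ _ JM; apply: JM; exact: mgenX.
Qed.

Lemma mgenXP A m : mgen A 'X_[m] <-> up A m.
Proof.
rewrite mgenP; split; first by apply; rewrite msuppX inE.
by move=> H m'; rewrite msuppX inE => /eqP ->.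
Qed.

Lemma colonX A g v : mgen A (g * 'X_[v]) <-> (forall m, m \in msupp g -> up A (v + m)%MM).
Proof.
rewrite mgenP; split => H m.
  by move=> Hm; apply: H; rewrite (perm_mem (msuppMX _ _)); apply/mapP; exists m.
by rewrite (perm_mem (msuppMX _ _)) => /mapP [m' Hm' ->]; apply: H.
Qed.

End Mono.



Section Mono2.
Variables (K : fieldType) (n : nat).
Local Notation R := {mpoly K[n]}.
Implicit Types (A B : 'X_{1..n} -> Prop) (f g : R).

Definition addset A B (m : 'X_{1..n}) := exists a b, [/\ A a, B b & m = (a + b)%MM].

Lemma lem_addMM (a b c d : 'X_{1..n}) : (a <= c)%MM -> (b <= d)%MM -> (a + b <= c + d)%MM.
Proof.
move=> /mnm_lepP H1 /mnm_lepP H2; apply/mnm_lepP => i.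
by rewrite !mnmDE leq_add.
Qed.

Lemma mul_mgen (J1 J2 : R -> Prop) A B :
  (forall f, J1 f <-> mgen A f) -> (forall f, J2 f <-> mgen B f) ->
  forall f, ideal_mul J1 J2 f <-> mgen (addset A B) f.
Proof.
move=> E1 E2 f; split.
- apply: gen_min; first exact: mgen_ideal.
  move=> x [a [b [/E1 /mgenP Ha /E2 /mgenP Hb ->]]].
  apply/mgenP => m /msuppM_le /allpairsP [[m1 m2] /= [/Ha [a' Aa' le1] /Hb [b' Bb' le2] ->]].
  by exists (a' + b')%MM; [exists a', b'|apply: lem_addMM].
- apply: gen_min; first exact: gen_ideal.
  move=> x [m [[a [b [Aa Bb ->]]] ->]]; apply: gen_in.
  by exists 'X_[a], 'X_[b]; split; [apply/E1/mgenX|apply/E2/mgenX|rewrite mpolyXD].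
Qed.

Fixpoint Gpow A k : 'X_{1..n} -> Prop :=
  match k with
  | 0 => fun m => m = 0%MM
  | k'.+1 => addset A (Gpow A k')
  end.

Lemma pow_mgen (J : R -> Prop) A : (forall f, J f <-> mgen A f) ->
  forall k f, ideal_pow J k f <-> mgen (Gpow A k) f.
Proof.
move=> E; elim=> [|k IH] f /=.
  split=> // _; rewrite -[f]mulr1 -mpolyX0.
  by case: (mgen_ideal K (Gpow A 0)) => _ _ JM; apply: JM; apply: mgenX.
exact: mul_mgen.
Qed.

End Mono2.



Definition pb (P : Prop) : bool := if excluded_middle_informative P then true else false.
Lemma pbP P : reflect P (pb P).
Proof. by rewrite /pb; case: excluded_middle_informative => H; constructor. Qed.

Lemma count_lt (T : eqType) (a b : pred T) (s : seq T) x0 :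
  (forall x, a x -> b x) -> x0 \in s -> b x0 -> ~~ a x0 -> (count a s < count b s)%N.
Proof.
move=> ab; elim: s => //= x s IH; rewrite inE => /orP[/eqP <-|H] bx ax.
  rewrite (negbTE ax) bx add0n add1n ltnS; exact: sub_count.
rewrite -addnS; apply: leq_add; last exact: IH.
by case ax': (a x); first by rewrite (ab _ ax').
Qed.

Section Graded.
Variables (K : fieldType) (n : nat).
Local Notation R := {mpoly K[n]}.
Implicit Types (A B : 'X_{1..n} -> Prop) (f g y : R).

Lemma max_exists (s : seq 'X_{1..n}) (V : 'X_{1..n} -> Prop) :
  (exists2 x, x \in s & V x) ->
  exists x, [/\ x \in s, V x & forall z : 'X_{1..n}, z \in s -> V z -> (z <= x)%O].
Proof.
elim: s => [[x]//|x s IH] Hex.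
case: (classic (exists2 z, z \in s & V z)) => [/IH [x' [Hx' Vx' Mx']]|Hn].
  case: (classic (V x)) => Vx.
    case: (leP x x') => [le|lt].
      exists x'; split => //; first by rewrite inE Hx' orbT.
      by move=> y; rewrite inE => /orP[/eqP ->|/Mx'].
    exists x; split => //; first by rewrite inE eqxx.
    move=> y; rewrite inE => /orP[/eqP -> //|/Mx' H /H le]; exact: le_trans le (ltW lt).
  exists x'; split => //; first by rewrite inE Hx' orbT.
  by move=> y; rewrite inE => /orP[/eqP ->|/Mx'].
have Vx : V x.
  case: Hex => z; rewrite inE => /orP[/eqP -> //|zs Vz]; exfalso; apply: Hn; by exists z.
exists x; split => //; first by rewrite inE eqxx.
move=> y; rewrite inE => /orP[/eqP -> //|ys Vy]; exfalso; apply: Hn; by exists y.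
Qed.

Lemma coef_top (U : 'X_{1..n} -> Prop) g y a1 b1 :
  (forall a b, U a -> U (a + b)%MM) -> ~ U (a1 + b1)%MM ->
  (forall a, a \in msupp g -> ~ U a -> (a <= a1)%O) ->
  (forall b, b \in msupp y -> ~ U b -> (b <= b1)%O) ->
  (g * y)@_(a1 + b1) = g@_a1 * y@_b1.
Proof.
move=> HU nU Hg Hy.
set g' := g - g@_a1 *: 'X_[a1].
have Eg : g = g@_a1 *: 'X_[a1] + g' by rewrite /g' addrC subrK.
rewrite {1}Eg.
rewrite mulrDl mcoeffD -scalerAl mcoeffZ (mulrC 'X_[a1] y) mcoeffMX.
rewrite [X in _ + X]memN_msupp_eq0 ?addr0 //.
apply/negP => /msuppM_le /allpairsP [[m1 m2] /= [H1 H2 E]].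
have ne1 : m1 != a1.
  apply/negP => /eqP E1; move: H1; rewrite mcoeff_msupp /g' E1.
  by rewrite mcoeffB mcoeffZ mcoeffX eqxx mulr1 subrr eqxx.
have H1g : m1 \in msupp g.
  move: H1; rewrite !mcoeff_msupp /g' mcoeffB mcoeffZ mcoeffX.
  have ne1r : (a1 == m1) = false by rewrite eq_sym (negbTE ne1).
  by rewrite ne1r mulr0 subr0.
have nU1 : ~ U m1 by move=> /(HU _ m2); rewrite -E.
have nU2 : ~ U m2 by move=> /(HU _ m1); rewrite addmC -E.
have lt1 : (m1 < a1)%O by rewrite lt_neqAle ne1 Hg.
have := ltmc_le_add lt1 (Hy _ H2 nU2); by rewrite -E ltxx.
Qed.

Lemma ks A g y : g != 0 -> mgen A (g * y) -> exists N, mgen A ('X_[mlead g] ^+ N * y).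
Proof.
move=> g0.
have [c Hc] : exists c, (count (fun b => ~~ pb (up A b)) (msupp y) <= c)%N by eexists.
elim: c y Hc => [|c IH] y Hc Hgy.
- exists 0%N; rewrite expr0 mul1r; apply/mgenP => m Hm.
  case: (pbP (up A m)) => // Hn.
  have : (0 < count (fun b => ~~ pb (up A b)) (msupp y))%N.
    by rewrite -has_count; apply/hasP; exists m => //; apply/negP => /pbP.
  by rewrite leqn0 in Hc; rewrite (eqP Hc).
- case: (classic (exists2 b, b \in msupp y & ~ up A b)) => [Hex|Hn]; last first.
    exists 0%N; rewrite expr0 mul1r; apply/mgenP => m Hm.
    by apply: NNPP => H; apply: Hn; exists m.
  have [b1 [Hb1 nb1 Mb1]] := max_exists Hex.
  set a1 := mlead g.
  have Hup : up A (a1 + b1)%MM.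
    apply: NNPP => nU.
    have E := coef_top (y := y) (fun a b => @up_addr n A a b) nU (fun a Ha _ => msupp_le_mlead Ha) Mb1.
    apply: nU; move/mgenP: Hgy; apply; rewrite mcoeff_msupp E mulf_neq0 //.
      by rewrite mleadc_eq0.
    by rewrite -mcoeff_msupp.
  have Hc' : (count (fun b => ~~ pb (up A b)) (msupp (y * 'X_[a1])) <= c)%N.
    rewrite (permP (msuppMX _ _)) count_map -ltnS.
    apply: leq_trans Hc; apply: (count_lt (x0 := b1)) => //=.
    + move=> x; apply: contra => /pbP H; apply/pbP; exact: up_addl.
    + by apply/negP => /pbP.
    + by rewrite negbK; apply/pbP.
  have Hgy' : mgen A (g * (y * 'X_[a1])).
    by rewrite mulrA; case: (mgen_ideal K A) => _ _ JM; rewrite mulrC; apply: JM.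
  have [N HN] := IH _ Hc' Hgy'.
  by exists N.+1; rewrite exprSr -mulrA [_ * y]mulrC.
Qed.

End Graded.



Section Graded2.
Variables (K : fieldType) (n : nat).
Local Notation R := {mpoly K[n]}.
Implicit Types (A B : 'X_{1..n} -> Prop) (f g y : R).

Lemma ideal_terms (P : R -> Prop) g : is_ideal P ->
  (forall a, a \in msupp g -> P 'X_[a]) -> P g.
Proof.
move=> HP H; rewrite [g]mpolyE; apply: ideal_sum => // a Ha.
case: HP => _ _ JM; rewrite -mul_mpolyC; apply: JM; exact: H.
Qed.

Lemma prime_mono A (P : R -> Prop) f : is_prime_ideal P ->
  (forall g, P g <-> mgen A (g * f)) ->
  forall g, P g -> forall a, a \in msupp g -> P 'X_[a].
Proof.
move=> HP E g.
have [c Hc] : exists c, (size (msupp g) <= c)%N by eexists.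
elim: c g Hc => [|c IH] g Hc Pg a Ha.
  by move: Hc; rewrite leqn0 => /nilP Hn; rewrite Hn in Ha.
have g0 : g != 0 by apply/negP => /eqP g0; rewrite g0 mcoeff_msupp mcoeff0 eqxx in Ha.
have Pa1 : P 'X_[mlead g].
  have [N HN] := ks g0 (proj1 (E g) Pg).
  apply: (prime_pow (k := N)) => //; apply/E; by rewrite mpolyXn -mpolyXn.
case: HP => [[P0 PD PM] _ _].
set g' := g - g@_(mlead g) *: 'X_[mlead g].
have Pg' : P g'.
  by apply: PD => //; rewrite -scaleNr -mul_mpolyC; apply: PM.
case: (eqVneq a (mlead g)) => [-> //|ne].
apply: (IH g') => //.
  rewrite (perm_size (msupp_rem _ _)) size_rem ?mlead_supp //.
  by rewrite -ltnS prednK //; move: Ha; case: (msupp g).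
rewrite mcoeff_msupp /g' mcoeffB mcoeffZ mcoeffX.
have ner : (mlead g == a) = false by rewrite eq_sym (negbTE ne).
by rewrite ner mulr0 subr0 -mcoeff_msupp.
Qed.

Lemma graded A (P : R -> Prop) f : is_prime_ideal P ->
  (forall g, P g <-> mgen A (g * f)) ->
  exists v, forall g, P g <-> mgen A (g * 'X_[v]).
Proof.
move=> HP E.
have mon v : P 'X_[v] <-> forall m, m \in msupp f -> up A (v + m)%MM.
  by rewrite E mulrC colonX.
have HP' := HP; case: HP' => [HI P1 Pm].
have [m0 [Hm0 H0]] : exists m0, m0 \in msupp f /\ forall v, up A (v + m0)%MM -> P 'X_[v].
  apply: NNPP => Hn.
  have Hall : forall m, m \in msupp f -> exists v, up A (v + m)%MM /\ ~ P 'X_[v].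
    move=> m Hm; apply: NNPP => Hn2; apply: Hn; exists m; split => // v Hv.
    by apply: NNPP => Pv; apply: Hn2; exists v.
  have : forall l : seq 'X_{1..n}, {subset l <= msupp f} ->
      exists V, (forall m, m \in l -> up A (V + m)%MM) /\ ~ P 'X_[V].
    elim=> [|m l IH] Hl.
      by exists 0%MM; split => //; rewrite mpolyX0.
    have Hl' : {subset l <= msupp f} by move=> x Hx; apply: Hl; rewrite inE Hx orbT.
    have [V [HV nPV]] := IH Hl'.
    have [v [Hv nPv]] := Hall m (Hl m (mem_head _ _)).
    exists (V + v)%MM; split.
      move=> m'; rewrite inE => /orP[/eqP ->|/HV H].
        by rewrite -addmA; apply: up_addl.
      by rewrite -addmA [(v + m')%MM]addmC addmA; apply: up_addr.
    by rewrite mpolyXD => /Pm [].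
  move=> /(_ (msupp f) (fun x Hx => Hx)) [V [HV nPV]]; apply: nPV.
  by apply/mon.
exists m0 => g; rewrite colonX; split.
  move=> Pg m Hm; rewrite addmC; apply: (proj1 (mon m)) => //.
  exact: (prime_mono HP E Pg).
move=> H; apply: ideal_terms => // a Ha; apply: H0; rewrite addmC; exact: H.
Qed.

End Graded2.



Section Vars.
Variables (K : fieldType) (n : nat).
Local Notation R := {mpoly K[n]}.
Implicit Types (A B : 'X_{1..n} -> Prop) (f g h y : R).

Lemma prime_var (P : R -> Prop) u : is_prime_ideal P -> P 'X_[u] ->
  exists i, P 'X_[U_(i)] /\ (0 < u i)%N.
Proof.
move=> HP; have HP' := HP; case: HP' => _ P1 Pm.
have [c Hc] : exists c, (mdeg u <= c)%N by eexists.
elim: c u Hc => [|c IH] u Hc Pu.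
  have u0 : u = 0%MM by apply/eqP; rewrite -mdeg_eq0 -leqn0.
  by rewrite u0 mpolyX0 in Pu.
case: (pickP (fun i => u i != 0%N)) => [i ui|H0]; last first.
  have u0 : u = 0%MM by apply/mnmP => i; rewrite mnm0E; apply/eqP; rewrite -[_ == _]negbK H0.
  by rewrite u0 mpolyX0 in Pu.
have le : (U_(i) <= u)%MM by rewrite lep1mP.
move: Pu; rewrite -{1}(submK le) mpolyXD => /Pm [Pu'|Pi]; last first.
  by exists i; split => //; rewrite lt0n.
have : (mdeg (u - U_(i)) <= c)%N.
  by rewrite -ltnS; apply: leq_trans Hc; rewrite -{2}(submK le) mdegD mdeg1 addn1.
move=> /IH /(_ Pu') [j [Pj uj]]; exists j; split => //.
by move: uj; rewrite mnmBE; case: (u j).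
Qed.

Definition UW (W : 'I_n -> Prop) (a : 'X_{1..n}) := exists i, W i /\ (0 < a i)%N.
Definition ZW (W : 'I_n -> Prop) (g : R) := forall a, a \in msupp g -> UW W a.

Lemma ZW_prime W g h : ZW W (g * h) -> ZW W g \/ ZW W h.
Proof.
move=> Z; apply: NNPP => Hn.
have nZg : ~ ZW W g by move=> H; apply: Hn; left.
have nZh : ~ ZW W h by move=> H; apply: Hn; right.
have exg : exists2 a, a \in msupp g & ~ UW W a.
  apply: NNPP => H; apply: nZg => a Ha; apply: NNPP => Hu; apply: H; by exists a.
have exh : exists2 a, a \in msupp h & ~ UW W a.
  apply: NNPP => H; apply: nZh => a Ha; apply: NNPP => Hu; apply: H; by exists a.
have [a1 [Ha1 na1 Ma1]] := max_exists exg.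
have [b1 [Hb1 nb1 Mb1]] := max_exists exh.
have HU : forall a b, UW W a -> UW W (a + b)%MM.
  by move=> a b [i [Wi ai]]; exists i; split => //; rewrite mnmDE ltn_addr.
have nab : ~ UW W (a1 + b1)%MM.
  move=> [i [Wi]]; rewrite mnmDE addn_gt0 => /orP[H|H].
    by apply: na1; exists i.
  by apply: nb1; exists i.
have E := coef_top HU nab Ma1 Mb1.
apply: nab; apply: Z; rewrite mcoeff_msupp E mulf_neq0 // -mcoeff_msupp //.
Qed.

End Vars.



Section Loc.
Variables (K : fieldType) (n : nat) (S : {set 'I_n}).
Local Notation R := {mpoly K[n]}.
Local Notation s := #|S|.
Local Notation R' := {mpoly K[s]}.

Lemma loc_mapM (f g : R) : loc_map S (f * g) = loc_map S f * loc_map S g.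
Proof. rewrite /loc_map; exact: (fst (mmap_is_multiplicative (@loc_var K n S) (@mpolyC s K))). Qed.

Lemma loc_mapD (f g : R) : loc_map S (f + g) = loc_map S f + loc_map S g.
Proof. exact: mmapD. Qed.

Definition phie (m : 'X_{1..n}) : 'X_{1..s} := [multinom m (enum_val (A:=S) k) | k < s].
Definition psie (u : 'X_{1..s}) : 'X_{1..n} :=
  [multinom (if [pick k : 'I_s | enum_val (A := S) k == i] is Some k then u k else 0%N) | i < n].
Definition outN (N : nat) : 'X_{1..n} := [multinom (if i \in S then 0%N else N) | i < n].

Lemma phieE m k : phie m k = m (enum_val (A:=S) k).
Proof. exact: mnmE. Qed.

Lemma pick_val t : [pick k : 'I_s | enum_val (A := S) k == enum_val (A:=S) t] = Some t.
Proof.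
case: pickP => [k /eqP /enum_val_inj -> //|/(_ t)]; by rewrite eqxx.
Qed.

Lemma pick_out i : i \notin S -> [pick k : 'I_s | enum_val (A := S) k == i] = None.
Proof.
move=> Hi; case: pickP => // k /eqP Ek; exfalso; move: Hi; rewrite -Ek.
by rewrite (enum_valP k).
Qed.

Lemma in_S i : i \in S -> exists k : 'I_s, enum_val (A:=S) k = i.
Proof. by move=> Hi; exists (enum_rank_in Hi i); rewrite enum_rankK_in. Qed.

Lemma psie_val u t : psie u (enum_val (A:=S) t) = u t.
Proof. by rewrite mnmE pick_val. Qed.

Lemma psie_out u i : i \notin S -> psie u i = 0%N.
Proof. by move=> Hi; rewrite mnmE pick_out. Qed.

Lemma phie_psie u : phie (psie u) = u.
Proof. by apply/mnmP => k; rewrite phieE psie_val. Qed.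

Lemma phieD m1 m2 : phie (m1 + m2)%MM = (phie m1 + phie m2)%MM.
Proof. by apply/mnmP => k; rewrite mnmDE !phieE mnmDE. Qed.

Lemma phie0 : phie 0%MM = 0%MM.
Proof. by apply/mnmP => k; rewrite phieE !mnm0E. Qed.

Lemma phieU t : phie (U_(enum_val (A:=S) t))%MM = (U_(t))%MM.
Proof.
apply/mnmP => k; rewrite phieE !mnm1E.
by rewrite (inj_eq enum_val_inj).
Qed.

Lemma phie_le m1 m2 : (m1 <= m2)%MM -> (phie m1 <= phie m2)%MM.
Proof. by move=> /mnm_lepP H; apply/mnm_lepP => k; rewrite !phieE. Qed.

Lemma loc_mapX m : loc_map S ('X_[m] : R) = 'X_[phie m].
Proof.
rewrite /loc_map mmapX /mmap1 mpolyXE_id.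
rewrite (bigID (fun i => i \in S)) /= [X in _ * X]big1 ?mulr1; last first.
  by move=> i Hi; rewrite /loc_var pick_out // expr1n.
rewrite big_enum_val /=.
apply: eq_bigr => k _; by rewrite /loc_var pick_val phieE.
Qed.


Definition phiset (G : 'X_{1..n} -> Prop) (u : 'X_{1..s}) := exists2 g, G g & u = phie g.

Lemma loc_mgen (I : R -> Prop) G : (forall f, I f <-> mgen G f) ->
  forall f : R', @monomial_localization K n S I f <-> mgen (phiset G) f.
Proof.
move=> E f; split.
- apply: gen_min; first exact: mgen_ideal.
  move=> x [f' /E [sl [Hs ->]] ->].
  have [I0 ID IM] := mgen_ideal K (phiset G).
  elim: sl Hs => [|p sl IH] Hs.
    by rewrite big_nil /loc_map mmap0.
  rewrite big_cons loc_mapD loc_mapM; apply: ID; last first.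
    by apply: IH => q Hq; apply: Hs; rewrite inE Hq orbT.
  have [g [Gg ->]] : exists g, G g /\ p.2 = 'X_[g] by apply: Hs; rewrite inE eqxx.
  by rewrite loc_mapX; apply: IM; apply: mgenX; exists g.
- apply: gen_min; first exact: gen_ideal.
  move=> x [u [[g Gg ->] ->]]; apply: gen_in; exists 'X_[g]; last by rewrite loc_mapX.
  by apply/E; exact: mgenX.
Qed.

Lemma Gpow_phi G k u : Gpow (phiset G) k u <-> exists g, Gpow G k g /\ u = phie g.
Proof.
elim: k u => [|k IH] u /=.
  by split => [->|[g [-> ->]]]; [exists 0%MM; rewrite phie0|rewrite phie0].
split.
  move=> [a [b [[a' Ga' ->] /IH [b' [Hb' ->]] ->]]].
  by exists (a' + b')%MM; split; [exists a', b'|rewrite phieD].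
move=> [g [[a [b [Ga Gb ->]]] ->]]; exists (phie a), (phie b); split.
- by exists a.
- by apply/IH; exists b.
- by rewrite phieD.
Qed.

Lemma up_phi G k u : up (Gpow (phiset G) k) u <-> exists g, Gpow G k g /\ (phie g <= u)%MM.
Proof.
split.
  by move=> [a /Gpow_phi [g [Hg ->]] le]; exists g.
by move=> [g [Hg le]]; exists (phie g) => //; apply/Gpow_phi; exists g.
Qed.

End Loc.



Lemma colonXX (K : fieldType) n (A : 'X_{1..n} -> Prop) u v :
  @mgen K n A ('X_[u] * 'X_[v]) <-> up A (v + u)%MM.
Proof. by rewrite -mpolyXD mgenXP addmC. Qed.

Lemma le_mdeg n (m : 'X_{1..n}) j : (m j <= mdeg m)%N.
Proof. by rewrite mdegE (bigD1 j) //= leq_addr. Qed.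

Lemma ideal_pow_ideal (R : comNzRingType) (I : R -> Prop) k : is_ideal (ideal_pow I k.+1).
Proof. exact: gen_ideal. Qed.

Lemma ZWX (K : fieldType) n (W : 'I_n -> Prop) a : ZW W ('X_[a] : {mpoly K[n]}) <-> UW W a.
Proof.
split; first by apply; rewrite msuppX inE.
by move=> H b; rewrite msuppX inE => /eqP ->.
Qed.

Section Main.
Variables (K : fieldType) (n : nat) (S : {set 'I_n}).
Local Notation R := {mpoly K[n]}.
Local Notation s := #|S|.
Local Notation R' := {mpoly K[s]}.

Definition outm (a : 'X_{1..n}) : 'X_{1..n} := [multinom (if i \in S then 0%N else a i) | i < n].

Lemma phie_outm a : phie S (outm a) = 0%MM.
Proof. by apply/mnmP => k; rewrite phieE mnmE mnm0E (enum_valP k). Qed.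


End Main.

Theorem theorem3p20 (K : fieldType) (n : nat) (I : {mpoly K[n]} -> Prop)
  (S : {set 'I_n}) :
  is_monomial_ideal I ->
  (forall f, I f -> @monomial_prime K n S f) ->
  copersistent I ->
  copersistent (@monomial_localization K n S I).
Proof.
move=> [_ [G EG]] _ Hcop k k1 P' [HP' [f Hf]].
have EI := pow_mgen EG.
have ELk := pow_mgen (loc_mgen (S:=S) EG).
set A1 := Gpow G k.+1; set A0 := Gpow G k.
set B1 := Gpow (phiset (S:=S) G) k.+1; set B0 := Gpow (phiset (S:=S) G) k.
have [m' Hm'] : exists m', forall g, P' g <-> mgen B1 (g * 'X_[m']).
  apply: (graded HP' (f := f)) => g; rewrite Hf; exact: ELk.
have monP u : P' 'X_[u] <-> up B1 (m' + u)%MM by rewrite Hm' colonXX.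
have HN : exists N, forall t : 'I_#|S|, P' 'X_[U_(t)] ->
    exists a, [/\ A1 a, (phie S a <= m' + U_(t))%MM & forall j, (a j <= N)%N].
  have : forall l : seq 'I_#|S|, exists N, forall t, t \in l -> P' 'X_[U_(t)] ->
      exists a, [/\ A1 a, (phie S a <= m' + U_(t))%MM & forall j, (a j <= N)%N].
    elim=> [|t l [N HN]]; first by exists 0%N.
    case: (classic (P' 'X_[U_(t)])) => [Pt|nPt]; last first.
      exists N => t'; rewrite inE => /orP[/eqP -> //|/HN //].
    have [a [Aa le]] : exists a, A1 a /\ (phie S a <= m' + U_(t))%MM.
      by move/monP: Pt => /up_phi [a [Aa le]]; exists a.
    exists (maxn N (mdeg a)) => t'; rewrite inE => /orP[/eqP -> _|/HN H /H [b [Ab lb Nb]]].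
      exists a; split => // j; apply: leq_trans (le_mdeg a j) _; exact: leq_maxr.
    exists b; split => // j; apply: leq_trans (Nb j) _; exact: leq_maxl.
  move=> /(_ (enum 'I_#|S|)) [N HN]; exists N => t; apply: HN; by rewrite mem_enum.
have [N HN'] := HN.
set mu := (psie (S:=S) m' + outm S [multinom N | _ < n])%MM.
set W : 'I_n -> Prop := fun i => exists t, P' 'X_[U_(t)] /\ enum_val (A:=S) t = i.
have keyQ : forall al, up A1 (mu + al)%MM <-> UW W al.
  move=> al; split.
  - move=> [a Aa le].
    have : up B1 (m' + phie S al)%MM.
      apply/up_phi; exists a; split => //.
      by have := phie_le S le; rewrite phieD /mu phieD phie_psie phie_outm addm0.
    move/monP => /(prime_var HP') [t [Pt pos]].
    exists (enum_val (A:=S) t); split; first by exists t.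
    by move: pos; rewrite phieE.
  - move=> [i [[t [Pt <-]] pos]]; have [a [Aa le Na]] := HN' t Pt.
    exists a => //; apply/mnm_lepP => j; rewrite !mnmDE /outm mnmE.
    case: (boolP (j \in S)) => Hj.
      have [k0 Ek] := in_S Hj; rewrite -Ek psie_val addn0.
      move/mnm_lepP: le => /(_ k0); rewrite phieE mnmDE mnm1E => H.
      apply: leq_trans H _; rewrite leq_add2l.
      by case: (eqVneq t k0) => [<-|]; rewrite //= ?lt0n.
    rewrite mnmE; apply: leq_trans (Na j) _; rewrite addnC addnA; exact: leq_addl.
pose Q := fun g : {mpoly K[n]} => ideal_pow I k.+1 (g * 'X_[mu]).
have QZ : forall g, Q g <-> ZW W g.
  move=> g; rewrite /Q EI colonX; split => H al Hal; apply/keyQ; exact: H.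
have primeQ : is_prime_ideal Q.
  split.
  - have [I0 ID IM] := ideal_pow_ideal I k; split; rewrite /Q.
    + by rewrite mul0r.
    + by move=> a b Ha Hb; rewrite mulrDl; exact: ID.
    + by move=> r a Ha; rewrite -mulrA; exact: IM.
  - move/QZ; rewrite -mpolyX0 ZWX => [[i [_]]]; by rewrite mnm0E.
  - by move=> a b /QZ /ZW_prime [/QZ|/QZ]; [left|right].
have assQ : Ass (ideal_pow I k.+1) Q by split => //; exists 'X_[mu].
have [_ [h Hh]] := Hcop k k1 Q assQ.
have [nu Hnu] : exists nu, forall g, Q g <-> mgen A0 (g * 'X_[nu]).
  apply: (graded primeQ (f := h)) => g; rewrite Hh; exact: EI.
have monQ al : UW W al <-> up A0 (nu + al)%MM.
  by rewrite -(ZWX K) -QZ Hnu colonXX.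
have [[_ _ PM] _ _] := HP'.
split => //; exists 'X_[phie S nu] => g.
rewrite ELk Hm' !colonX; split => H u Hu; have := H u Hu.
- move/monP => /(prime_var HP') [t [Pt pos]].
  have : UW W (U_(enum_val (A:=S) t))%MM.
    by exists (enum_val (A:=S) t); split; [exists t|rewrite mnm1E eqxx].
  move/monQ => [a Aa le]; apply/up_phi; exists a; split => //.
  apply: lepm_trans (phie_le S le) _; rewrite phieD phieU.
  by apply: lem_addMM (lepm_refl _) _; rewrite lep1mP -lt0n.
- move/up_phi => [a [Aa le]].
  set al := (psie (S:=S) u + outm S a)%MM.
  have : up A0 (nu + al)%MM.
    exists a => //; apply/mnm_lepP => j; rewrite !mnmDE /outm mnmE.
    case: (boolP (j \in S)) => Hj.
      have [k0 Ek] := in_S Hj; rewrite -Ek psie_val addn0.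
      by move/mnm_lepP: le => /(_ k0); rewrite phieE mnmDE phieE.
    by rewrite psie_out // add0n leq_addl.
  move/monQ => [i [[t [Pt <-]] pos]].
  apply/monP.
  have ut : (U_(t) <= u)%MM.
    by rewrite lep1mP -lt0n; move: pos; rewrite /al mnmDE psie_val /outm mnmE (enum_valP t) addn0.
  by rewrite -(submK ut) mpolyXD; apply: PM.
Qed.
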